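(* Let $\varphi$ be a continuous Archimedean t-norm, $A^{+}=(a^{+}_{ij}),A^{-}=(a^{-}_{ij})\in[0,1]^{m\times n}$, $b\in[0,1]^m$, and let $I_j$, $S'_{ij}$ be as in the context. Let $i\in\{1,\dots,m\}$, $j\in\{1,\dots,n\}$ with $S'_{ij}\neq\varnothing$. Then $I_j$ is a nonempty closed interval $[L_j,U_j]$ and $S'_{ij}$ is one of the sets $\{L_j\}$, $\{U_j\}$, $\{L_j,U_j\}$, $[L_j,U_j]$.
   Context: A t-norm is a binary operation on $[0,1]$ that is commutative, associative, nondecreasing in each argument and has $1$ as neutral element; a continuous t-norm $\varphi$ is Archimedean if $\varphi(x,x)<x$ for all $x\in(0,1)$. For $i\in\mathscr{I}=\{1,\dots,m\}$, $j\in\mathscr{J}=\{1,\dots,n\}$: $S_{ij}=\{t\in[0,1]:\max\{\varphi(a^{+}_{ij},t),\varphi(a^{-}_{ij},1-t)\}=b_i\}$, $I_{ij}=\{t\in[0,1]:\max\{\varphi(a^{+}_{ij},t),\varphi(a^{-}_{ij},1-t)\}\le b_i\}$, $I_j=\bigcap_{i\in\mathscr{I}}I_{ij}$, and $S'_{ij}=S_{ij}\cap I_j$. *)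

(* Defs.v *)
From Stdlib Require Import Reals.
Open Scope R_scope.

Definition unit_I (x : R) : Prop := 0 <= x <= 1.

(* A t-norm on [0,1], represented as a function R -> R -> R whose values
   matter only on [0,1] x [0,1]. *)
Definition is_tnorm (phi : R -> R -> R) : Prop :=
  (forall x y, unit_I x -> unit_I y -> unit_I (phi x y)) /\
  (forall x y, unit_I x -> unit_I y -> phi x y = phi y x) /\
  (forall x y z, unit_I x -> unit_I y -> unit_I z ->
     phi x (phi y z) = phi (phi x y) z) /\
  (forall x x' y y', unit_I x -> unit_I x' -> unit_I y -> unit_I y' ->
     x <= x' -> y <= y' -> phi x y <= phi x' y') /\
  (forall x, unit_I x -> phi x 1 = x).

Definition continuous_on_unit_square (phi : R -> R -> R) : Prop :=
  forall x y, unit_I x -> unit_I y ->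
  forall eps, 0 < eps -> exists delta, 0 < delta /\
    forall x' y', unit_I x' -> unit_I y' ->
      Rabs (x' - x) < delta -> Rabs (y' - y) < delta ->
      Rabs (phi x' y' - phi x y) < eps.

Definition continuous_archimedean_tnorm (phi : R -> R -> R) : Prop :=
  is_tnorm phi /\ continuous_on_unit_square phi /\
  (forall x, 0 < x < 1 -> phi x x < x).

(* Row indices i < m, column indices j < n (0-based). *)
Definition lhs (phi : R -> R -> R) (Ap Am : nat -> nat -> R) (i j : nat) (t : R) : R :=
  Rmax (phi (Ap i j) t) (phi (Am i j) (1 - t)).

Definition S_set phi Ap Am (b : nat -> R) i j : R -> Prop :=
  fun t => unit_I t /\ lhs phi Ap Am i j t = b i.

Definition I_set phi Ap Am (b : nat -> R) i j : R -> Prop :=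
  fun t => unit_I t /\ lhs phi Ap Am i j t <= b i.

Definition I_col phi Ap Am b (m : nat) j : R -> Prop :=
  fun t => unit_I t /\ forall i, (i < m)%nat -> I_set phi Ap Am b i j t.

Definition S'_set phi Ap Am b m i j : R -> Prop :=
  fun t => S_set phi Ap Am b i j t /\ I_col phi Ap Am b m j t.

(* Main.v *)
Require Import Defs.
From Stdlib Require Import Reals Lra Classical.
Open Scope R_scope.

Ltac rabs := unfold Rabs in *; repeat match goal with
  | |- context[Rcase_abs ?x] => destruct (Rcase_abs x)
  | H: context[Rcase_abs ?x] |- _ => destruct (Rcase_abs x) end; lra.

Definition contf (f : R -> R) (x : R) : Prop :=
  forall eps, 0 < eps -> exists d, 0 < d /\
    forall y, unit_I y -> Rabs (y - x) < d -> Rabs (f y - f x) < eps.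

Lemma cont_le f x c : contf f x ->
  (forall d, 0 < d -> exists u, unit_I u /\ Rabs (u - x) < d /\ f u <= c) -> f x <= c.
Proof.
  intros Hc Hap. destruct (Rle_lt_dec (f x) c) as [h|h]; auto.
  destruct (Hc (f x - c)) as [d [Hd Hd']]; [lra|].
  destruct (Hap d Hd) as [u [Hu [Hud Hfu]]]. specialize (Hd' u Hu Hud). rabs.
Qed.

Lemma cont_ge f x c : contf f x ->
  (forall d, 0 < d -> exists u, unit_I u /\ Rabs (u - x) < d /\ c <= f u) -> c <= f x.
Proof.
  intros Hc Hap. destruct (Rle_lt_dec c (f x)) as [h|h]; auto.
  destruct (Hc (c - f x)) as [d [Hd Hd']]; [lra|].
  destruct (Hap d Hd) as [u [Hu [Hud Hfu]]]. specialize (Hd' u Hu Hud). rabs.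
Qed.

Lemma lub_approx E M : is_lub E M -> forall d, 0 < d -> exists u, E u /\ M - d < u /\ u <= M.
Proof.
  intros [Hub Hleast] d Hd. apply NNPP; intro Hno.
  assert (M <= M - d); [|lra].
  apply Hleast; intros u Hu. destruct (Rle_lt_dec u (M - d)) as [h|h]; auto.
  exfalso; apply Hno; exists u. split; [exact Hu|]. split; [lra | apply Hub; exact Hu].
Qed.

Lemma glb_ex (E : R -> Prop) : (exists x, E x) -> (exists l, forall x, E x -> l <= x) ->
  exists L, (forall x, E x -> L <= x) /\
    (forall d, 0 < d -> exists u, E u /\ L <= u < L + d).
Proof.
  intros [x0 Hx0] [l Hl].
  destruct (completeness (fun v => E (- v))) as [L' HL'].
  { exists (- l). intros v Hv. specialize (Hl _ Hv). lra. }
  { exists (- x0). rewrite Ropp_involutive. auto. }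
  exists (- L'). split.
  - intros x Hx. destruct HL' as [Hub _]. assert (- x <= L'); [|lra].
    apply Hub. rewrite Ropp_involutive; auto.
  - intros d Hd. destruct (lub_approx _ _ HL' d Hd) as [v [Hv [h1 h2]]].
    exists (- v). split; auto. lra.
Qed.

Lemma tn_unit phi x y : is_tnorm phi -> unit_I x -> unit_I y -> unit_I (phi x y).
Proof. intros [H _]; auto. Qed.

Lemma tn_mono phi a y y' : is_tnorm phi -> unit_I a -> unit_I y -> unit_I y' -> y <= y' ->
  phi a y <= phi a y'.
Proof. intros [_ [_ [_ [H _]]]] Ha Hy Hy' Hle. apply H; auto; lra. Qed.

Lemma tn_le phi a y : is_tnorm phi -> unit_I a -> unit_I y -> phi a y <= a.
Proof.
  intros Ht Ha Hy. destruct Ht as [H1 [H2 [H3 [H4 H5]]]] eqn:E.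
  rewrite <- (H5 a Ha) at 2. apply tn_mono; auto. unfold unit_I; lra.
  unfold unit_I in Hy; lra.
Qed.

Lemma tn_zero phi a : is_tnorm phi -> unit_I a -> phi a 0 = 0.
Proof.
  intros Ht Ha. pose proof Ht as [H1 [H2 [H3 [H4 H5]]]].
  assert (U0 : unit_I 0) by (unfold unit_I; lra).
  rewrite H2; auto. pose proof (tn_le phi 0 a Ht U0 Ha).
  pose proof (H1 0 a U0 Ha). unfold unit_I in *; lra.
Qed.

Lemma cont_phi phi a y : continuous_on_unit_square phi -> unit_I a -> unit_I y ->
  contf (phi a) y.
Proof.
  intros Hc Ha Hy eps He. destruct (Hc a y Ha Hy eps He) as [d [Hd Hd']].
  exists d; split; auto. intros y' Hy' Hyd. apply Hd'; auto.
  replace (a - a) with 0 by ring. rewrite Rabs_R0; auto.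
Qed.

Lemma cont_phi1m phi a y : continuous_on_unit_square phi -> unit_I a -> unit_I y ->
  contf (fun t => phi a (1 - t)) y.
Proof.
  intros Hc Ha Hy eps He.
  assert (H1y : unit_I (1 - y)) by (unfold unit_I in *; lra).
  destruct (Hc a (1 - y) Ha H1y eps He) as [d [Hd Hd']].
  exists d; split; auto. intros y' Hy' Hyd. apply Hd'; auto.
  unfold unit_I in *; lra.
  replace (a - a) with 0 by ring. rewrite Rabs_R0; auto.
  replace (1 - y' - (1 - y)) with (- (y' - y)) by ring. rewrite Rabs_Ropp; auto.
Qed.

Lemma strict phi a t t' : continuous_archimedean_tnorm phi -> unit_I a -> unit_I t ->
  unit_I t' -> t < t' -> 0 < phi a t -> phi a t < phi a t'.
Proof.
  intros [Ht [Hc Harch]] Ha HUt HUt' Htt' Hpos.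
  destruct (Rle_lt_dec (phi a t') (phi a t)) as [Hle|Hlt]; auto.
  assert (Hx : phi a t' = phi a t).
  { pose proof (tn_mono phi a t t' Ht Ha HUt HUt' (Rlt_le _ _ Htt')). lra. }
  exfalso. set (x := phi a t) in *.
  assert (Ux : unit_I x) by (apply tn_unit; auto).
  pose proof Ht as [H1 [H2 [H3 [H4 H5]]]].
  assert (U0 : unit_I 0) by (unfold unit_I; lra).
  assert (U1 : unit_I 1) by (unfold unit_I; lra).
  destruct (completeness (fun u => unit_I u /\ phi t' u <= t)) as [s Hs].
  { exists 1. intros u [Hu _]. unfold unit_I in Hu; lra. }
  { exists 0. split; auto. rewrite tn_zero; auto. unfold unit_I in HUt; lra. }
  assert (Us : unit_I s).
  { destruct Hs as [Hub Hl]. split.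
    - apply Hub. split; auto. rewrite tn_zero; auto. unfold unit_I in HUt; lra.
    - apply Hl. intros u [Hu _]. unfold unit_I in Hu; lra. }
  assert (Hs1 : phi t' s <= t).
  { apply cont_le. apply cont_phi; auto.
    intros d Hd. destruct (lub_approx _ _ Hs d Hd) as [u [[Hu Hu2] [h1 h2]]].
    exists u; split; auto; split; auto. rabs. }
  assert (Hslt : s < 1).
  { destruct (Rle_lt_dec 1 s); auto. assert (s = 1) by (unfold unit_I in Us; lra).
    subst s. rewrite H5 in Hs1; auto. lra. }
  assert (Hs2 : t <= phi t' s).
  { apply cont_ge. apply cont_phi; auto.
    intros d Hd. set (u := s + Rmin d (1 - s) / 2).
    assert (Hm1 : Rmin d (1 - s) <= d) by apply Rmin_l.
    assert (Hm2 : Rmin d (1 - s) <= 1 - s) by apply Rmin_r.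
    assert (Hm3 : 0 < Rmin d (1 - s)) by (apply Rmin_glb_lt; lra).
    assert (Uu : unit_I u) by (unfold u, unit_I in *; lra).
    exists u; split; auto; split. unfold u; rabs.
    destruct (Rle_lt_dec t (phi t' u)) as [h|h]; auto.
    exfalso. destruct Hs as [Hub _]. assert (u <= s) by (apply Hub; split; auto; lra).
    unfold u in *; lra. }
  assert (Hts : phi t' s = t) by lra.
  assert (Hxs : phi x s = x).
  { unfold x at 2. rewrite <- Hts. rewrite H3; auto. rewrite Hx. reflexivity. }
  destruct (completeness (fun u => unit_I u /\ phi x u < x)) as [e He].
  { exists 1. intros u [Hu _]. unfold unit_I in Hu; lra. }
  { exists 0. split; auto. rewrite tn_zero; auto. }
  destruct He as [Heub Hel] eqn:HeE.
  assert (Hes : e <= s).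
  { apply Hel. intros u [Hu Hu2]. destruct (Rle_lt_dec u s) as [h|h]; auto.
    pose proof (tn_mono phi x s u Ht Ux Us Hu (Rlt_le _ _ h)). lra. }
  assert (Ue : unit_I e).
  { split. apply Heub. split; auto. rewrite tn_zero; auto.
    unfold unit_I in Us; lra. }
  assert (Hxe : x <= phi x e).
  { apply cont_ge. apply cont_phi; auto.
    intros d Hd. set (u := e + Rmin d (1 - e) / 2).
    assert (Hm1 : Rmin d (1 - e) <= d) by apply Rmin_l.
    assert (Hm2 : Rmin d (1 - e) <= 1 - e) by apply Rmin_r.
    assert (Hm3 : 0 < Rmin d (1 - e)) by (apply Rmin_glb_lt; lra).
    assert (Uu : unit_I u) by (unfold u, unit_I in *; lra).
    exists u; split; auto; split. unfold u; rabs.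
    destruct (Rle_lt_dec x (phi x u)) as [h|h]; auto.
    exfalso. assert (u <= e) by (apply Heub; split; auto).
    unfold u in *; lra. }
  assert (Hxe' : phi x e = x) by (pose proof (tn_le phi x e Ht Ux Ue); lra).
  assert (Uee : unit_I (phi e e)) by (apply tn_unit; auto).
  assert (Hee : phi x (phi e e) = x) by (rewrite H3, Hxe'; auto).
  assert (Hee1 : e <= phi e e).
  { destruct (Rle_lt_dec e (phi e e)) as [h|h]; auto. exfalso.
    destruct (lub_approx _ _ He (e - phi e e)) as [u [[Hu Hu2] [h1 h2]]]; [lra|].
    pose proof (tn_mono phi x (phi e e) u Ht Ux Uee Hu ltac:(lra)). lra. }
  assert (Hee2 : phi e e <= e) by (apply tn_le; auto).
  destruct (Rle_lt_dec e 0) as [h|h].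
  - assert (e = 0) by (unfold unit_I in Ue; lra). subst e.
    rewrite tn_zero in Hxe'; auto. lra.
  - assert (phi e e < e) by (apply Harch; lra). lra.
Qed.

Lemma Pext phi Ap Am b m j t i : I_col phi Ap Am b m j t -> (i < m)%nat ->
  phi (Ap i j) t <= b i /\ phi (Am i j) (1 - t) <= b i.
Proof.
  intros [_ H] Hi. destruct (H i Hi) as [_ H']. unfold lhs in H'.
  split; eapply Rle_trans; [apply Rmax_l | exact H' | apply Rmax_r | exact H'].
Qed.

Theorem corollary4 (phi : R -> R -> R) (m n : nat)
  (Ap Am : nat -> nat -> R) (b : nat -> R) (i j : nat) :
  continuous_archimedean_tnorm phi ->
  (forall i' j', (i' < m)%nat -> (j' < n)%nat -> unit_I (Ap i' j') /\ unit_I (Am i' j')) ->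
  (forall i', (i' < m)%nat -> unit_I (b i')) ->
  (i < m)%nat -> (j < n)%nat ->
  (exists t, S'_set phi Ap Am b m i j t) ->
  exists L U : R, L <= U /\
    (forall t, I_col phi Ap Am b m j t <-> L <= t <= U) /\
    ((forall t, S'_set phi Ap Am b m i j t <-> t = L) \/
     (forall t, S'_set phi Ap Am b m i j t <-> t = U) \/
     (forall t, S'_set phi Ap Am b m i j t <-> t = L \/ t = U) \/
     (forall t, S'_set phi Ap Am b m i j t <-> L <= t <= U)).
Proof.
  intros HT HA Hb Hi Hj [t0 Ht0].
  pose proof HT as [Ht [Hc Harch]].
  set (P := I_col phi Ap Am b m j).
  assert (HP0 : P t0) by exact (proj2 Ht0).
  assert (Ut0 : unit_I t0) by exact (proj1 HP0).
  destruct (completeness P) as [U HU].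
  { exists 1. intros t [Htu _]. unfold unit_I in Htu; lra. }
  { exists t0; exact HP0. }
  destruct (glb_ex P) as [L [HLb HLa]].
  { exists t0; exact HP0. }
  { exists 0. intros t [Htu _]. unfold unit_I in Htu; lra. }
  assert (HUb : forall t, P t -> t <= U) by (destruct HU as [H _]; exact H).
  assert (UU : unit_I U).
  { split. pose proof (HUb t0 HP0). unfold unit_I in Ut0; lra.
    destruct HU as [_ H]. apply H. intros t [Htu _]. unfold unit_I in Htu; lra. }
  assert (UL : unit_I L).
  { split. destruct (HLa 1) as [u [Hu Hu2]]; [lra|].
    destruct (Rle_lt_dec 0 L) as [h|h]; auto.
    destruct (HLa (- L)) as [u' [Hu' Hu'2]]; [lra|].
    destruct Hu' as [Hu'' _]. unfold unit_I in Hu''; lra.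
    pose proof (HLb t0 HP0). unfold unit_I in Ut0; lra. }
  assert (PU : P U).
  { split; auto. intros i' Hi'. destruct (HA i' j Hi' Hj) as [UAp UAm].
    split; auto. unfold lhs. apply Rmax_lub.
    - apply (cont_le (phi (Ap i' j))). apply cont_phi; auto.
      intros d Hd. destruct (lub_approx _ _ HU d Hd) as [u [Hu [h1 h2]]].
      exists u. split; [exact (proj1 Hu)|]. split; [rabs|].
      exact (proj1 (Pext _ _ _ _ _ _ _ _ Hu Hi')).
    - eapply Rle_trans; [| exact (proj2 (Pext _ _ _ _ _ _ _ _ HP0 Hi'))].
      apply tn_mono; auto; unfold unit_I in *; try lra.
      pose proof (HUb t0 HP0); lra. }
  assert (PL : P L).
  { split; auto. intros i' Hi'. destruct (HA i' j Hi' Hj) as [UAp UAm].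
    split; auto. unfold lhs. apply Rmax_lub.
    - eapply Rle_trans; [| exact (proj1 (Pext _ _ _ _ _ _ _ _ HP0 Hi'))].
      apply tn_mono; auto.
    - apply (cont_le (fun t => phi (Am i' j) (1 - t))). apply cont_phi1m; auto.
      intros d Hd. destruct (HLa d Hd) as [u [Hu [h1 h2]]].
      exists u. split; [exact (proj1 Hu)|]. split; [rabs|].
      exact (proj2 (Pext _ _ _ _ _ _ _ _ Hu Hi')). }
  assert (HLU : L <= U) by (apply HUb; auto).
  assert (Hint : forall t, P t <-> L <= t <= U).
  { intro t; split.
    - intro H. split; [apply HLb | apply HUb]; auto.
    - intros [h1 h2]. assert (Utt : unit_I t) by (unfold unit_I in *; lra).
      split; auto. intros i' Hi'. destruct (HA i' j Hi' Hj) as [UAp UAm].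
      split; auto. unfold lhs. apply Rmax_lub.
      + eapply Rle_trans; [| exact (proj1 (Pext _ _ _ _ _ _ _ _ PU Hi'))].
        apply tn_mono; auto.
      + eapply Rle_trans; [| exact (proj2 (Pext _ _ _ _ _ _ _ _ PL Hi'))].
        apply tn_mono; auto; unfold unit_I in *; lra. }
  exists L, U. split; auto. split; [exact Hint|].
  destruct (HA i j Hi Hj) as [UAp UAm].
  destruct (Rle_lt_dec (b i) 0) as [hb|hb].
  - right; right; right. intro t. rewrite <- Hint. split.
    + intros [_ H]; exact H.
    + intro H. split; auto. split; [exact (proj1 H)|].
      destruct (Pext _ _ _ _ _ _ _ _ H Hi) as [h1 h2].
      assert (Utt : unit_I t) by exact (proj1 H).
      pose proof (tn_unit phi _ _ Ht UAp Utt) as [h3 _].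
      unfold lhs. pose proof (Rmax_l (phi (Ap i j) t) (phi (Am i j) (1 - t))).
      pose proof (Rmax_lub _ _ _ h1 h2). lra.
  - assert (HC : forall t, S'_set phi Ap Am b m i j t -> t = L \/ t = U).
    { intros t [[Utt Heq] HPt]. fold P in HPt.
      destruct (Pext _ _ _ _ _ _ _ _ PU Hi) as [hU _].
      destruct (Pext _ _ _ _ _ _ _ _ PL Hi) as [_ hL].
      pose proof (HUb t HPt). pose proof (HLb t HPt).
      unfold lhs, Rmax in Heq. destruct (Rle_dec _ _) as [h|h].
      - left. destruct (Rle_lt_dec t L) as [h'|h']; [lra|].
        pose proof (strict phi (Am i j) (1 - t) (1 - L) HT UAm
          ltac:(unfold unit_I in *; lra) ltac:(unfold unit_I in *; lra) ltac:(lra) ltac:(lra)).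
        lra.
      - right. destruct (Rle_lt_dec U t) as [h'|h']; [lra|].
        pose proof (strict phi (Ap i j) t U HT UAp Utt UU h' ltac:(lra)). lra. }
    destruct (classic (S'_set phi Ap Am b m i j L)) as [SL|SL];
    destruct (classic (S'_set phi Ap Am b m i j U)) as [SU|SU].
    + right; right; left. intro t; split; [apply HC | intros [-> | ->]; auto].
    + left. intro t; split; [| intros ->; auto].
      intro Hs. destruct (HC t Hs) as [->| ->]; auto; contradiction.
    + right; left. intro t; split; [| intros ->; auto].
      intro Hs. destruct (HC t Hs) as [->| ->]; auto; contradiction.
    + exfalso. destruct (HC t0 (conj (proj1 Ht0) HP0)) as [e|e]; rewrite e in Ht0;
      [apply SL | apply SU]; exact Ht0.
Qed.
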